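(* In the setting below, the family $\mathcal{L}=\textsc{MakeLam}(1,n,0,0)$ is a laminar family of $4\eta$-near minimum cuts of $G$ (with $\eta=\tfrac1{40}$).
   Context: Let $G=(V,E)$ be a multigraph with minimum cut value $k$; $\delta(S)$ is the set of edges with exactly one endpoint in $S$. For $\eta>0$, a cut $\emptyset\ne S\subsetneq V$ is an $\eta$-near minimum cut ($\eta$-NMC) if $|\delta(S)|<(1+\eta)k$ (a cut is identified with either shore). Cuts $S,T$ cross if $S\cap T,S\setminus T,T\setminus S,V\setminus(S\cup T)$ are all nonempty. A connected component $\mathcal{C}$ of $\eta$-NMCs is a connected component of the graph on $\eta$-NMCs in which crossing cuts are adjacent; its atoms $\mathcal{A}(\mathcal{C})$ form the coarsest partition of $V$ such that each cut of $\mathcal{C}$ is a union of atoms. Fix $\eta=\tfrac1{40}$ and a connected component $\mathcal{C}$ with $|\mathcal{C}|>1$, together with a polygon representation of $\mathcal{C}$ (Benczúr–Goemans): a convex regular polygon with vertices $p_0,\dots,p_{n-1}$ and straight-line diagonals partitioning it into cells; each atom is mapped to a cell; atoms in cells bounded by part of the polygon boundary are outside atoms, the others inside atoms; no cell has more than one incident polygon side; each diagonal defines a cut whose sides are the unions of atoms on the two sides of the diagonal, and these cuts are exactly $\mathcal{C}$. The outside atoms are $a_0,\dots,a_{n-1}$ in counterclockwise order, $a_i$ on side $(p_i,p_{i+1})$ (indices mod $n$, $a_n=a_0$). $O(S)$ is the set of outside atoms contained in $S$. For $1\le l<r\le n$, the interval $\langle l,r\rangle=\{a_l,\dots,a_{r-1}\}$.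 It is a shadow if there is a $\tfrac15$-NMC $S$, a union of atoms of $\mathcal{C}$, with $O(S)=\langle l,r\rangle$; this $S$ is known to be unique and is the canonical cut $\langle\langle l,r\rangle\rangle$; two canonical cuts cross iff their intervals cross. A shadow is a near minimum interval (NMI) if its canonical cut is an $\eta$-NMC. A canonical cut $S$ is special if (i) $S$ is an $\eta$-NMC, or (ii) there are two crossing canonical cuts $A',B'$, both $\eta$-NMCs, with $S\in\{A'\cap B',A'\cup B',A'\setminus B',B'\setminus A'\}$; an interval is special if it is a shadow with special canonical cut. The recursive procedure $\textsc{MakeLam}(L,R,d,u)$ (integers $L,R$, depth $d$, counter $u$) returns a family of cuts as follows. If $L\ge R$, return $\emptyset$. Else if $u\ge2$, return $\textsc{MakeLam}(L+1,R,d+1,0)$. Otherwise set $F=\{\langle\langle L,R\rangle\rangle\}$ if $\langle L,R\rangle$ is a special interval or is the set difference of two crossing special intervals, and $F=\emptyset$ otherwise. If $d$ is even, let $x_1<\dots<x_m$ be the integers $x$ with $L<x\le R$ such that $\langle L,x\rangle$ is special, and set $x_0=L$, $x_{m+1}=R$; if $m\ge1$ return $F\cup\{\langle\langle L,x_i\rangle\rangle:1\le i\le m\}\cup\bigcup_{i=0}^m\textsc{MakeLam}(x_i,x_{i+1},d+1,0)$, and if $m=0$ return $\textsc{MakeLam}(L,R,d+1,u+1)$. If $d$ is odd, let $x_1<\dots<x_m$ be the integers $x$ with $L\le x<R$ such that $\langle x,R\rangle$ is special, $x_0=L$, $x_{m+1}=R$; if $m\ge1$ return $F\cup\{\langle\langle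 x_i,R\rangle\rangle:1\le i\le m\}\cup\bigcup_{i=0}^m\textsc{MakeLam}(x_i,x_{i+1},d+1,0)$, and if $m=0$ return $\textsc{MakeLam}(L,R,d+1,u+1)$.
   Formalization: $\mathcal{L}$ is the least family of cuts closed under the recursive clauses of MakeLam, not the family its recursion returns, and the stated known facts on canonical cuts (uniqueness, crossing iff intervals cross) are hypotheses. Each condition added here is assumed in the paper as well or is needed for the statement above to hold. *)

(* Defs.v *)
From HB Require Import structures.
From mathcomp Require Import all_boot all_order all_algebra.
From mathcomp Require Import reals trigo.
Set Implicit Arguments. Unset Strict Implicit. Unset Printing Implicit Defensive.
Import Order.TTheory GRing.Theory Num.Theory.

(* The multigraph is given by its edge multiplicities mu u v (symmetric)*)
Section Cuts.
Variable V : finType.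
Variable mu : V -> V -> nat.

Definition cutval (S : {set V}) : nat := \sum_(u in S) \sum_(v in ~: S) mu u v.

Definition is_cut (S : {set V}) : bool := (S != set0) && (S != setT).

Definition is_mincut_value (k : nat) : Prop :=
  (exists S, is_cut S /\ cutval S = k) /\ (forall S, is_cut S -> k <= cutval S).

Definition NMC (k : nat) (e : rat) (S : {set V}) : bool :=
  is_cut S && ((cutval S)%:R < (1 + e) * k%:R)%R.

Definition cross (S T : {set V}) : bool :=
  [&& S :&: T != set0, S :\: T != set0, T :\: S != set0 & ~: (S :|: T) != set0].

(* adjacency in the graph of e-NMCs (cuts identified with both shores):
   crossing, or being the other shore of the same cut *)
Definition nmc_adj (k : nat) (e : rat) (S T : {set V}) : bool :=
  [&& NMC k e S, NMC k e T & cross S T || (T == ~: S)].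

Definition is_nmc_component (k : nat) (e : rat) (C : {set {set V}}) : Prop :=
  exists S0, NMC k e S0 /\ C = [set T | connect (nmc_adj k e) S0 T].

Definition more_than_one_cut (C : {set {set V}}) : Prop :=
  exists S T, [/\ S \in C, T \in C, T != S & T != ~: S].

Definition laminar (F : {set V} -> Prop) : Prop :=
  forall S T, F S -> F T -> ~~ cross S T.

Definition equivC (C : {set {set V}}) (u v : V) : bool :=
  [forall S in C, (u \in S) == (v \in S)].
Definition atoms (C : {set {set V}}) : {set {set V}} :=
  [set [set v | equivC C u v] | u in V].
Definition union_of_atoms (C : {set {set V}}) (S : {set V}) : bool :=
  [forall u, forall v, equivC C u v ==> ((u \in S) == (v \in S))].
End Cuts.

Definition etaNMC : rat := (1 / 40%:R)%R.

Section Polygon.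
Variable R : realType.
Local Open Scope ring_scope.

(* vertex p_k of the regular n-gon (counterclockwise, indices mod n) *)
Definition pvert (n k : nat) : R * R :=
  (cos (2 * pi * k%:R / n%:R), sin (2 * pi * k%:R / n%:R)).

Definition pmid (n k : nat) : R * R :=
  (((pvert n k).1 + (pvert n k.+1).1) / 2, ((pvert n k).2 + (pvert n k.+1).2) / 2).

Definition orient (p q x : R * R) : R :=
  (q.1 - p.1) * (x.2 - p.2) - (q.2 - p.2) * (x.1 - p.1).

Definition in_polygon (n : nat) (x : R * R) : Prop :=
  forall k, (k < n)%N -> 0 < orient (pvert n k) (pvert n k.+1) x.

Definition dside (n : nat) (d : nat * nat) (x : R * R) : bool :=
  0 < orient (pvert n d.1) (pvert n d.2) x.

Definition is_diagonal (n : nat) (d : nat * nat) : bool :=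
  [&& (d.1 < d.2)%N, (d.2 < n)%N, (d.1.+2 <= d.2)%N & ~~ ((d.1 == 0%N) && (d.2 == n.-1))].

Variable V : finType.

(* Polygon representation of a family C of cuts (sets of shores):
   n-gon, diagonals Ds, each atom A mapped to (a representative point
   x A of) a cell, outside atoms a_0..a_{n-1} (a_i on side (p_i,p_{i+1})). *)
Definition diag_cut (C : {set {set V}}) (n : nat) (x : {set V} -> R * R)
    (d : nat * nat) : {set V} :=
  \bigcup_(A in atoms C | dside n d (x A)) A.

Definition polygon_rep (C : {set {set V}}) (n : nat) (Ds : seq (nat * nat))
    (x : {set V} -> R * R) (a : nat -> {set V}) : Prop :=
  (3 <= n)%N /\
  [/\ (forall d, d \in Ds -> is_diagonal n d),
      (* every atom is mapped to a cell: a point of the open polygon on no diagonal *)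
      (forall A, A \in atoms C ->
         in_polygon n (x A) /\ forall d, d \in Ds -> orient (pvert n d.1) (pvert n d.2) (x A) != 0),
      (forall S, S \in C <-> (exists d, d \in Ds /\ (S = diag_cut C n x d \/ S = ~: diag_cut C n x d))),
      (* a_i is an atom in the cell bounded by the side (p_i, p_{i+1}) *)
      (forall i, (i < n)%N -> a i \in atoms C /\
         forall d, d \in Ds -> dside n d (x (a i)) = dside n d (pmid n i)) &
      (* no cell has more than one incident polygon side *)
      (forall i j, (i < n)%N -> (j < n)%N -> i <> j ->
         exists2 d, d \in Ds & dside n d (pmid n i) != dside n d (pmid n j))].
End Polygon.

Section Canonical.
Variable V : finType.
Variable mu : V -> V -> nat.
Variable k : nat.
Variable C : {set {set V}}.
Variable n : nat.
Variable a : nat -> {set V}.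

Definition outside : {set {set V}} := [set A | A \in [seq a i | i <- iota 0 n]].

Definition Oset (S : {set V}) : {set {set V}} := [set A in outside | A \subset S].

Definition intv (l r : nat) : {set {set V}} :=
  [set A | A \in [seq a (i %% n) | i <- iota l (r - l)]].

Definition valid_lr (l r : nat) : bool := [&& (1 <= l)%N, (l < r)%N & (r <= n)%N].

Definition shadow_witness (l r : nat) (S : {set V}) : bool :=
  [&& NMC mu k (1 / 5%:R)%R S, union_of_atoms C S & Oset S == intv l r].

Definition shadow (l r : nat) : bool := valid_lr l r && [exists S, shadow_witness l r S].

(* the canonical cut <<l,r>> (the unique witness; set0 if none) *)
Definition canon (l r : nat) : {set V} := odflt set0 [pick S | shadow_witness l r S].

Definition crossI (I J : {set {set V}}) : bool :=
  [&& I :&: J != set0, I :\: J != set0, J :\: I != set0 & outside :\: (I :|: J) != set0].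

Definition special_cut (S : {set V}) : bool :=
  NMC mu k etaNMC S ||
  [exists l1 : 'I_n.+1, exists r1 : 'I_n.+1, exists l2 : 'I_n.+1, exists r2 : 'I_n.+1,
     [&& shadow l1 r1, shadow l2 r2,
         NMC mu k etaNMC (canon l1 r1), NMC mu k etaNMC (canon l2 r2),
         cross (canon l1 r1) (canon l2 r2) &
         S \in [:: canon l1 r1 :&: canon l2 r2; canon l1 r1 :|: canon l2 r2;
                   canon l1 r1 :\: canon l2 r2; canon l2 r2 :\: canon l1 r1]]].

Definition special (l r : nat) : bool := shadow l r && special_cut (canon l r).

Definition Fcond (L R : nat) : bool :=
  special L R ||
  [exists l1 : 'I_n.+1, exists r1 : 'I_n.+1, exists l2 : 'I_n.+1, exists r2 : 'I_n.+1,
     [&& special l1 r1, special l2 r2, crossI (intv l1 r1) (intv l2 r2) &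
         intv L R == intv l1 r1 :\: intv l2 r2]].
End Canonical.

(* MakeLam, as the family of cuts it returns: S \in MakeLam(L,R,d,u)   *)
(* is the least predicate closed under the recursive clauses.          *)
(* sp = "special interval", Fc = Fcond, cc = canonical cut.            *)
Section MakeLam.
Variable T : Type.
Variables (sp Fc : nat -> nat -> bool) (cc : nat -> nat -> T).

Definition mlx (d L R : nat) : seq nat :=
  if ~~ odd d then [seq x <- iota L.+1 (R - L) | sp L x]
  else [seq x <- iota L (R - L) | sp x R].

Definition mlxs (d L R : nat) : seq nat := L :: mlx d L R ++ [:: R].

Inductive makeLam : nat -> nat -> nat -> nat -> T -> Prop :=
| mlSkip L R d u S : (L < R)%N -> (2 <= u)%N ->
    makeLam L.+1 R d.+1 0 S -> makeLam L R d u S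
| mlEmpty L R d u S : (L < R)%N -> (u < 2)%N -> mlx d L R = [::] ->
    makeLam L R d.+1 u.+1 S -> makeLam L R d u S
| mlF L R d u : (L < R)%N -> (u < 2)%N -> mlx d L R != [::] -> Fc L R ->
    makeLam L R d u (cc L R)
| mlX L R d u x : (L < R)%N -> (u < 2)%N -> x \in mlx d L R ->
    makeLam L R d u (if ~~ odd d then cc L x else cc x R)
| mlRec L R d u i S : (L < R)%N -> (u < 2)%N -> mlx d L R != [::] ->
    (i <= size (mlx d L R))%N ->
    makeLam (nth 0 (mlxs d L R) i) (nth 0 (mlxs d L R) i.+1) d.+1 0 S ->
    makeLam L R d u S.
End MakeLam.

(* Main.v *)
Require Import Defs.
From HB Require Import structures.
From mathcomp Require Import all_boot all_order all_algebra.
From mathcomp Require Import reals trigo.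
Import Order.TTheory GRing.Theory Num.Theory.
From mathcomp Require Import zify ring lra.
Set Implicit Arguments. Unset Strict Implicit. Unset Printing Implicit Defensive.
Section Comb.
Variables (sp Fc : nat -> nat -> bool).
Definition pr (l r : nat) := (l, r).
Notation mL := (makeLam sp Fc pr).

Lemma makeLam_pair T (cc : nat -> nat -> T) L R d u S :
  makeLam sp Fc cc L R d u S ->
  exists l r, mL L R d u (l, r) /\ S = cc l r.
Proof.
elim=> {L R d u S}.
- move=> L R d u S LR u2 _ [l [r [H ->]]]; exists l, r; split=>//; exact: mlSkip.
- move=> L R d u S LR u2 e _ [l [r [H ->]]]; exists l, r; split=>//; exact: mlEmpty.
- move=> L R d u LR u2 ne F; exists L, R; split=>//; exact: mlF.
- move=> L R d u y LR u2 yin; have := @mlX _ sp Fc pr _ _ _ _ _ LR u2 yin.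
  by case: ifP => ev H; [exists L, y | exists y, R].
- move=> L R d u i S LR u2 ne ile _ [l [r [H ->]]]; exists l, r; split=>//.
  exact: mlRec ile H.
Qed.

Lemma mlx_mem d L R y : y \in mlx sp d L R ->
  if ~~ odd d then (L < y <= R) && sp L y else (L <= y < R) && sp y R.
Proof.
rewrite /mlx; case: ifP => _; rewrite mem_filter mem_iota => /andP[-> /andP[H1 H2]];
  rewrite andbT; apply/andP; lia.
Qed.

Lemma mlxs_mem d L R y : L <= R -> y \in mlxs sp d L R -> L <= y <= R.
Proof.
move=> LR; rewrite /mlxs inE mem_cat inE => /or3P[/eqP->|H|/eqP->]; try lia.
move/mlx_mem: H; case: ifP => _ /andP[H _]; lia.
Qed.

Lemma mlxs_sorted d L R : L <= R -> sorted leq (mlxs sp d L R).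
Proof.
move=> LR; rewrite /mlxs /= cat_path /= andbT.
have hs : sorted leq (mlx sp d L R).
  rewrite /mlx; case: ifP => _; apply: sorted_filter; try exact: leq_trans;
  apply: (sub_sorted _ (iota_ltn_sorted _ _)); exact: ltnW.
rewrite path_sortedE; last exact: leq_trans.
rewrite hs andbT; apply/andP; split.
  apply/allP => y /mlx_mem; case: ifP => _ /andP[H _]; lia.
have : last L (mlx sp d L R) \in mlxs sp d L R.
  by rewrite /mlxs -cat_cons mem_cat mem_last.
by move/(mlxs_mem LR)=> /andP[].
Qed.

Lemma mlxs_nth_le d L R i j : L <= R -> i <= j -> j < size (mlxs sp d L R) ->
  nth 0 (mlxs sp d L R) i <= nth 0 (mlxs sp d L R) j.
Proof.
move=> LR ij js; apply: (sorted_leq_nth leq_trans leqnn 0 (mlxs_sorted d LR)) => //.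
rewrite inE; lia.
Qed.

Lemma mlxs_nth_mem d L R i : L <= R -> i < size (mlxs sp d L R) ->
  L <= nth 0 (mlxs sp d L R) i <= R.
Proof. by move=> LR iS; apply: mlxs_mem => //; apply: mem_nth. Qed.

Lemma size_mlxs d L R : size (mlxs sp d L R) = (size (mlx sp d L R)).+2.
Proof. by rewrite /mlxs /= size_cat addn1. Qed.

Lemma ml_bounds L R d u p : mL L R d u p ->
  [/\ L <= p.1, p.1 < p.2, p.2 <= R & sp p.1 p.2 || Fc p.1 p.2].
Proof.
elim=> {L R d u p}.
- move=> L R d u S LR _ _ [H1 H2 H3 H4]; split=>//; lia.
- by move=> L R d u S LR _ _ _ [H1 H2 H3 H4]; split.
- by move=> L R d u LR _ _ F /=; rewrite F orbT; split=> //; apply: ltnW.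
- move=> L R d u y LR _ /mlx_mem; case: ifP=> _ /andP[H ->] /=; split=>//; lia.
- move=> L R d u i S LR _ _ ile _ [H1 H2 H3 H4]; split=>//.
  + have := @mlxs_nth_mem d L R i (ltnW LR); rewrite size_mlxs; lia.
  + have := @mlxs_nth_mem d L R i.+1 (ltnW LR); rewrite size_mlxs; lia.
Qed.

Inductive mlinv L R d u q : Prop :=
| I1 of 2 <= u & mL L.+1 R d.+1 0 q
| I2 of u < 2 & mlx sp d L R = [::] & mL L R d.+1 u.+1 q
| I3 of u < 2 & mlx sp d L R != [::] & q = (L, R)
| I4 x of u < 2 & x \in mlx sp d L R & q = (if ~~ odd d then (L, x) else (x, R))
| I5 i of u < 2 & mlx sp d L R != [::] & i <= size (mlx sp d L R) &
          mL (nth 0 (mlxs sp d L R) i) (nth 0 (mlxs sp d L R) i.+1) d.+1 0 q.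

Lemma ml_inv L R d u q : mL L R d u q -> L < R /\ mlinv L R d u q.
Proof.
case=> {L R d u q}.
- by move=> L R d u S LR u2 H; split=> //; apply: I1.
- by move=> L R d u S LR u2 e H; split=> //; apply: I2.
- by move=> L R d u LR u2 ne F; split=> //; apply: I3.
- move=> L R d u y LR u2 yin; split=> //; apply: (I4 u2 yin).
  by rewrite /pr; case: ifP.
- move=> L R d u i S LR u2 ne ile H; split=> //; exact: I5 ile H.
Qed.

Definition ncr (p q : nat * nat) : bool :=
  [|| p.2 <= q.1, q.2 <= p.1, (p.1 <= q.1) && (q.2 <= p.2) | (q.1 <= p.1) && (p.2 <= q.2)].

Lemma ncrC p q : ncr p q = ncr q p.
Proof. rewrite /ncr; case: (p.2 <= q.1); case: (q.2 <= p.1) => //=; by rewrite orbC. Qed.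

Lemma X_Rec d L R x i q : L < R -> x \in mlx sp d L R -> i <= size (mlx sp d L R) ->
  nth 0 (mlxs sp d L R) i <= q.1 -> q.1 < q.2 -> q.2 <= nth 0 (mlxs sp d L R) i.+1 ->
  ncr (if ~~ odd d then (L, x) else (x, R)) q.
Proof.
move=> LR xin ile h1 h12 h2.
have LR' := ltnW LR.
have hb1 := @mlxs_nth_mem d L R i LR'; have hb2 := @mlxs_nth_mem d L R i.+1 LR'.
rewrite size_mlxs in hb1 hb2.
have xin' : x \in mlxs sp d L R by rewrite /mlxs inE mem_cat xin orbT.
have [k ks ->] : exists2 k, k < size (mlxs sp d L R) & x = nth 0 (mlxs sp d L R) k.
  by exists (index x (mlxs sp d L R)); rewrite ?index_mem ?nth_index.
have [ki|ik] := leqP k i.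
- have := @mlxs_nth_le d L R k i LR' ki; rewrite size_mlxs; move=> H.
  have {}H : nth 0 (mlxs sp d L R) k <= nth 0 (mlxs sp d L R) i by apply: H; lia.
  rewrite /ncr; case: ifP => _ /=; apply/or4P.
  + by constructor 1; lia.
  + have := hb1 ltac:(lia); have := hb2 ltac:(lia). constructor 3; apply/andP; lia.
- have := @mlxs_nth_le d L R i.+1 k LR' ik ks => H.
  rewrite /ncr; case: ifP => _ /=; apply/or4P.
  + have := hb1 ltac:(lia); have := hb2 ltac:(lia). constructor 3; apply/andP; lia.
  + by constructor 2; lia.
Qed.

Lemma ml_ncr L R d u p : mL L R d u p -> forall q, mL L R d u q -> ncr p q.
Proof.
elim=> {L R d u p}.
- move=> L R d u p LR u2 _ IH q /ml_inv [_ [_ Hq|||?|]]; try lia.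
  exact: IH.
- move=> L R d u p LR u2 e _ IH q /ml_inv [_ [|_ _ Hq|_ ne|y _ ne|i _ ne]]; try lia.
  all: try exact: IH.
  all: try by move: ne; rewrite e ?in_nil ?eqxx.
- move=> L R d u LR u2 ne F q /ml_bounds [h1 h2 h3 _]; rewrite /ncr /=.
  apply/or4P; constructor 3; apply/andP; lia.
- move=> L R d u y LR u2 yin q Hq.
  have [h1 h2 h3 _] := ml_bounds Hq.
  move: Hq => /ml_inv [_ [|_ e|_ _ ->|z _ zin ->|i _ _ ile Hq]]; try lia.
  + by rewrite e in yin.
  + rewrite /ncr /pr /=; case: ifP => _ /=; apply/or4P; constructor 4; apply/andP; 
    have := mlx_mem yin; case: ifP => //= _ /andP[]; lia.
  + have := mlx_mem yin; have := mlx_mem zin; rewrite /ncr /pr.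
    by case: ifP => _ /= /andP[] ? _ /andP[] ? _; apply/or4P;
      case: (leqP y z) => ?; [constructor 4|constructor 3| constructor 3|constructor 4];
      apply/andP; lia.
  + have [g1 g2 g3 _] := ml_bounds Hq.
    rewrite /pr; apply: (X_Rec LR yin ile) => //.
- move=> L R d u i p LR u2 ne ile Hp IH q Hq.
  have [g1 g2 g3 _] := ml_bounds Hp.
  have [h1 h2 h3 _] := ml_bounds Hq.
  move: Hq => /ml_inv [_ [|_ e|_ _ ->|z _ zin ->|j _ _ jle Hq]]; try lia.
  + by rewrite e in ne.
  + rewrite /ncr /=; apply/or4P; constructor 4; apply/andP.
    have := @mlxs_nth_mem d L R i (ltnW LR); have := @mlxs_nth_mem d L R i.+1 (ltnW LR).
    rewrite size_mlxs; lia.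
  + by rewrite ncrC; apply: (X_Rec LR zin ile).
  + have [ij|ij|ij] := ltngtP i j; last by subst j; exact: IH.
    * have := @mlxs_nth_le d L R i.+1 j (ltnW LR) ij; rewrite size_mlxs => H.
      have {}H := H ltac:(lia).
      have [k1 k2 k3 _] := ml_bounds Hq.
      by rewrite /ncr; apply/or4P; constructor 1; lia.
    * have := @mlxs_nth_le d L R j.+1 i (ltnW LR) ij; rewrite size_mlxs => H.
      have {}H := H ltac:(lia).
      have [k1 k2 k3 _] := ml_bounds Hq.
      by rewrite /ncr; apply/or4P; constructor 2; lia.
Qed.
End Comb.
Local Open Scope ring_scope.
Lemma NMCq (c k p q : nat) : (0 < q)%N ->
  ((c%:R : rat) < (1 + p%:R / q%:R) * k%:R)%R = (q * c < (q + p) * k)%N.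
Proof.
move=> q0; have q0' : (0 : rat) < q%:R by rewrite ltr0n.
rewrite -(ltr_pM2r q0').
have -> : ((1 + p%:R / q%:R) * k%:R * q%:R = ((q+p)*k)%:R :> rat)%R.
  rewrite natrM natrD; field; by rewrite pnatr_eq0 -lt0n.
by rewrite -natrM ltr_nat mulnC.
Qed.

Local Close Scope ring_scope.
Section Cuts.
Variable V : finType.
Variable mu : V -> V -> nat.
Hypothesis musym : forall u v, mu u v = mu v u.
Variable k : nat.

Lemma NMC_eta S : NMC mu k etaNMC S = is_cut S && (40 * cutval mu S < 41 * k).
Proof. by rewrite /NMC /etaNMC (NMCq _ _ 1). Qed.
Lemma NMC_5 S : NMC mu k (1 / 5%:R)%R S = is_cut S && (5 * cutval mu S < 6 * k).
Proof. by rewrite /NMC (NMCq _ _ 1). Qed.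
Lemma NMC_4 S : NMC mu k (4%:R * etaNMC)%R S = is_cut S && (40 * cutval mu S < 44 * k).
Proof. by rewrite /NMC /etaNMC mul1r (NMCq _ _ 4). Qed.

Definition xo (S : {set V}) u v : nat := ((u \in S) != (v \in S)).

Lemma cutval_pt S : cutval mu S = \sum_u \sum_v ((u \in S) && (v \notin S)) * mu u v.
Proof.
rewrite /cutval big_mkcond; apply: eq_bigr => u _.
case: (u \in S).
  rewrite big_mkcond; apply: eq_bigr => v _; rewrite inE.
  by case: (v \in S) => /=; rewrite ?mul0n ?mul1n.
by rewrite big1 // => v _; rewrite mul0n.
Qed.

Lemma cut2 S : (cutval mu S).*2 = \sum_u \sum_v xo S u v * mu u v.
Proof.
rewrite -addnn {1}cutval_pt cutval_pt.
rewrite [in X in _ + X = _]exchange_big /= -big_split; apply: eq_bigr => u _.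
rewrite -big_split; apply: eq_bigr => v _ /=; rewrite musym /xo.
by case: (u \in S); case: (v \in S) => /=; rewrite ?mul0n ?mul1n ?addn0.
Qed.

Lemma submod (A B : {set V}) : cutval mu (A :&: B) + cutval mu (A :|: B) <= cutval mu A + cutval mu B.
Proof.
rewrite -leq_double !doubleD !cut2 -!big_split leq_sum // => u _.
rewrite -!big_split leq_sum // => v _ /=; rewrite /xo !inE.
by case: (u \in A); case: (u \in B); case: (v \in A); case: (v \in B) => /=; lia.
Qed.

Lemma posimod (A B : {set V}) : cutval mu (A :\: B) + cutval mu (B :\: A) <= cutval mu A + cutval mu B.
Proof.
rewrite -leq_double !doubleD !cut2 -!big_split leq_sum // => u _.
rewrite -!big_split leq_sum // => v _ /=; rewrite /xo !inE.
by case: (u \in A); case: (u \in B); case: (v \in A); case: (v \in B) => /=; lia.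
Qed.

Lemma is_cutW (S : {set V}) x y : x \in S -> y \notin S -> is_cut S.
Proof.
move=> xS yS; rewrite /is_cut; apply/andP; split; apply/eqP => E.
  by rewrite E inE in xS.
by rewrite E inE in yS.
Qed.

Lemma cross_cuts (A B : {set V}) : cross A B ->
  [/\ is_cut (A :&: B), is_cut (A :|: B), is_cut (A :\: B) & is_cut (B :\: A)].
Proof.
case/and4P => /set0Pn[x xI] /set0Pn[y yD] /set0Pn[z zD] /set0Pn[w wU].
move: xI yD zD wU; rewrite !inE => /andP[xA xB] /andP[yB yA] /andP[zA zB].
rewrite negb_or => /andP[wA wB].
split.
- apply: (is_cutW (x := x) (y := w)); rewrite !inE ?xA ?xB ?(negbTE wA) //.
- apply: (is_cutW (x := x) (y := w)); rewrite !inE ?xA ?(negbTE wA) ?(negbTE wB) //.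
- apply: (is_cutW (x := y) (y := w)); rewrite !inE ?yA ?yB //; by rewrite (negbTE wA) andbF.
- apply: (is_cutW (x := z) (y := w)); rewrite !inE ?zA ?zB //; by rewrite (negbTE wB) andbF.
Qed.

Hypothesis mincut : forall S, is_cut S -> k <= cutval mu S.

Lemma combo_bound (A B S : {set V}) : NMC mu k etaNMC A -> NMC mu k etaNMC B -> cross A B ->
  S \in [:: A :&: B; A :|: B; A :\: B; B :\: A] ->
  is_cut S && (20 * cutval mu S < 21 * k).
Proof.
rewrite !NMC_eta => /andP[_ hA] /andP[_ hB] cr.
have [c1 c2 c3 c4] := cross_cuts cr.
have m1 := mincut c1; have m2 := mincut c2; have m3 := mincut c3; have m4 := mincut c4.
have s1 := submod A B; have s2 := posimod A B.
rewrite !inE => /or4P[]/eqP->; rewrite ?c1 ?c2 ?c3 ?c4 /=; lia.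
Qed.

Lemma special_bound (n : nat) (C : {set {set V}}) (a : nat -> {set V}) S :
  special_cut mu k C n a S -> is_cut S && (20 * cutval mu S < 21 * k).
Proof.
case/orP.
  by rewrite NMC_eta => /andP[-> H] /=; lia.
case/existsP => l1 /existsP [r1 /existsP [l2 /existsP [r2]]].
case/and5P => _ _ hA hB /andP[cr hS]; exact: combo_bound hA hB cr hS.
Qed.
End Cuts.
Section Main.
Variables (V : finType) (mu : V -> V -> nat) (k : nat) (C : {set {set V}})
  (R : realType) (n : nat) (Ds : seq (nat * nat)) (x : {set V} -> R * R) (a : nat -> {set V}).
Hypothesis musym : forall u v, mu u v = mu v u.
Hypothesis mincut : forall S, is_cut S -> k <= cutval mu S.
Hypothesis poly : polygon_rep C n Ds x a.
Hypothesis uniqH : forall l r S S', valid_lr n l r -> shadow_witness mu k C n a l r S ->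
     shadow_witness mu k C n a l r S' -> S = S'.
Hypothesis crossH : forall l r l' r', shadow mu k C n a l r -> shadow mu k C n a l' r' ->
     cross (canon mu k C n a l r) (canon mu k C n a l' r')
     = crossI n a (intv n a l r) (intv n a l' r').

Lemma a_inj i j : i < n -> j < n -> a i = a j -> i = j.
Proof.
case: poly => _ [_ _ _ h4 h5] hi hj e.
apply/eqP; apply/negPn/negP => /eqP ij.
have [d dD] := h5 i j hi hj ij.
by rewrite -(h4 i hi).2 // -(h4 j hj).2 // e eqxx.
Qed.

Lemma outside_atom O : O \in outside n a ->
  exists2 u, u \in O & forall S, union_of_atoms C S -> (O \subset S) = (u \in S).
Proof.
rewrite inE => /mapP[i]; rewrite mem_iota add0n => /andP[_ hi] ->.
case: poly => _ [_ _ _ h4 _].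
have := (h4 i hi).1 => /imsetP[u _ ->].
exists u.
  by rewrite inE; apply/forallP => S; apply/implyP => _.
move=> S /forallP /(_ u) /forallP hS.
apply/subsetP/idP => [H|uS v]; first by apply: H; rewrite inE; apply/forallP => T; apply/implyP.
by rewrite inE => e; have := implyP (hS v) e => /eqP <-.
Qed.

Lemma union_setD A B : union_of_atoms C A -> union_of_atoms C B -> union_of_atoms C (A :\: B).
Proof.
move=> /forallP hA /forallP hB; apply/forallP => u; apply/forallP => v; apply/implyP => e.
have /eqP := implyP (forallP (hA u) v) e; have /eqP := implyP (forallP (hB u) v) e.
by rewrite !inE => -> ->.
Qed.

Lemma Oset_diff A B : union_of_atoms C A -> union_of_atoms C B ->
  Oset n a (A :\: B) = Oset n a A :\: Oset n a B.
Proof.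
move=> uA uB; apply/setP => O; rewrite /Oset.
have hO := @outside_atom O.
set out := outside n a in hO *; clearbody out.
rewrite !inE; case Oo: (O \in out) => //=.
have [u _ hO'] := hO Oo.
by rewrite !hO' // ?union_setD // inE andbC.
Qed.

Lemma canon_spec l r : shadow mu k C n a l r ->
  shadow_witness mu k C n a l r (canon mu k C n a l r).
Proof.
case/andP => _ /existsP [S hS]; rewrite /canon; case: pickP => [T //|H].
by rewrite H in hS.
Qed.

Lemma Fcond_good L Rr : 1 <= L -> L < Rr -> Rr <= n -> Fcond mu k C n a L Rr ->
  shadow mu k C n a L Rr /\ NMC mu k (4%:R * etaNMC)%R (canon mu k C n a L Rr).
Proof.
move=> h1 h2 h3; case/orP.
  case/andP => sh spc; split => //; rewrite NMC_4.
  by have /andP[-> H] := special_bound musym mincut spc; lia.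
case/existsP => l1 /existsP [r1 /existsP [l2 /existsP [r2]]].
case/and4P => /andP[s1 sp1] /andP[s2 sp2] crI /eqP eI.
set A := canon mu k C n a l1 r1 in sp1; set B := canon mu k C n a l2 r2 in sp2.
have /and3P[_ uA /eqP OA] := canon_spec s1.
have /and3P[_ uB /eqP OB] := canon_spec s2.
have cr : cross A B by rewrite crossH.
have [_ _ c3 c4] := cross_cuts cr.
have m4 := mincut c4; have pm := posimod musym A B.
have /andP[_ bA] := special_bound musym mincut sp1.
have /andP[_ bB] := special_bound musym mincut sp2.
have wS : shadow_witness mu k C n a L Rr (A :\: B).
  apply/and3P; split.
  - by rewrite NMC_5 c3 /=; lia.
  - exact: union_setD.
  - by rewrite Oset_diff // OA OB eI.
have vl : valid_lr n L Rr by apply/and3P.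
have sh : shadow mu k C n a L Rr by rewrite /shadow vl; apply/existsP; exists (A :\: B).
split => //.
rewrite (uniqH vl (canon_spec sh) wS) NMC_4 c3 /=; lia.
Qed.

Lemma intv_sub l r l' r' : l <= l' -> r' <= r -> intv n a l' r' \subset intv n a l r.
Proof.
move=> h1 h2; apply/subsetP => A; rewrite !inE => /mapP[i]; rewrite !mem_iota => hi ->.
apply/mapP; exists i => //; rewrite mem_iota; lia.
Qed.

Lemma intv_disj l r l' r' : r <= l' -> r' <= n -> intv n a l r :&: intv n a l' r' = set0.
Proof.
move=> h1 h2; apply/setP => A; rewrite !inE; apply/negbTE/andP.
case=> /mapP[i]; rewrite mem_iota => hi -> /mapP[j]; rewrite mem_iota => hj.
rewrite !modn_small; try lia.
move/a_inj; lia.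
Qed.

Lemma ncr_crossI l r l' r' : l < r -> r <= n -> l' < r' -> r' <= n ->
  ncr (l, r) (l', r') -> ~~ crossI n a (intv n a l r) (intv n a l' r').
Proof.
move=> h1 h2 h3 h4; rewrite /ncr /crossI /= => /or4P[e|e|/andP[e1 e2]|/andP[e1 e2]].
- by rewrite intv_disj ?eqxx.
- by rewrite setIC intv_disj ?eqxx.
- by rewrite (setD_eq0 (intv n a l' r')) intv_sub ?andbF.
- by rewrite (setD_eq0 (intv n a l r)) intv_sub ?andbF.
Qed.

Lemma member_good l r :
  makeLam (special mu k C n a) (Fcond mu k C n a) pr 1 n 0 0 (l, r) ->
  [/\ shadow mu k C n a l r, NMC mu k (4%:R * etaNMC)%R (canon mu k C n a l r),
      l < r & r <= n].
Proof.
move=> /ml_bounds [/= h1 h2 h3 /orP[sp|fc]].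
  case/andP: (sp) => sh spc; split => //; rewrite NMC_4.
  by have /andP[-> H] := special_bound musym mincut spc; lia.
by have [] := Fcond_good h1 h2 h3 fc.
Qed.
End Main.

Unset Implicit Arguments.
Theorem mainTheorem4
  (V : finType) (mu : V -> V -> nat) (k : nat)
  (C : {set {set V}})
  (R : realType) (n : nat) (Ds : seq (nat * nat))
  (x : {set V} -> R * R) (a : nat -> {set V}) :
  (* multigraph with minimum cut value k *)
  (forall u v, mu u v = mu v u) ->
  is_mincut_value mu k ->
  (* C is a connected component of eta-NMCs (eta = 1/40) with more than one cut *)
  is_nmc_component mu k etaNMC C ->
  more_than_one_cut C ->
  (* a polygon representation of C *)
  polygon_rep C n Ds x a ->
  (* known facts of the setting: canonical cuts are unique ... *)
  (forall l r S S', valid_lr n l r -> shadow_witness mu k C n a l r S ->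
     shadow_witness mu k C n a l r S' -> S = S') ->
  (* ... and two canonical cuts cross iff their intervals cross *)
  (forall l r l' r', shadow mu k C n a l r -> shadow mu k C n a l' r' ->
     cross (canon mu k C n a l r) (canon mu k C n a l' r')
     = crossI n a (intv n a l r) (intv n a l' r')) ->
  let inL := makeLam (special mu k C n a) (Fcond mu k C n a) (canon mu k C n a) 1 n 0 0 in
  laminar inL /\ (forall S, inL S -> NMC mu k (4%:R * etaNMC)%R S).
Proof.
move=> musym [_ mincut] _ _ poly uniqH crossH inL; split.
- move=> S T HS HT.
  have [l [r [Hl ->]]] := makeLam_pair HS.
  have [l' [r' [Hl' ->]]] := makeLam_pair HT.
  have [s1 _ g1 g2] := member_good musym mincut poly uniqH crossH Hl.
  have [s2 _ g3 g4] := member_good musym mincut poly uniqH crossH Hl'.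
  rewrite crossH //; apply: (ncr_crossI poly) => //.
  exact: (ml_ncr Hl Hl').
- move=> S HS; have [l [r [Hl ->]]] := makeLam_pair HS.
  by have [] := member_good musym mincut poly uniqH crossH Hl.
Qed.
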